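(* Let $f:[0,1]^n \to \mathbb{R}_+$ be a differentiable DR-submodular function and $\vec{x}^* \in [0,1]^n$ a maximizer of $f$. Consider a differentiable trajectory $(\vec{x}^{(t)},\vec{y}^{(t)})$ with $\vec{x}^{(t)} \le \vec{y}^{(t)}$ satisfying $\dot{\vec{x}}^{(t)} = \nabla f(\vec{x}^{(t)})^+$ and $\dot{\vec{y}}^{(t)} = \nabla f(\vec{y}^{(t)})^-$. Let $\vec{p}^{(t)}$ be the projection of $\vec{x}^*$ onto the box $[\vec{x}^{(t)},\vec{y}^{(t)}]$, i.e. $p^{(t)}_i = \min\{\max\{x^*_i, x^{(t)}_i\}, y^{(t)}_i\}$. Then at every time $t$ (where the derivatives exist) $$\frac12\left(\langle \nabla f(\vec{x}^{(t)}), \dot{\vec{x}}^{(t)}\rangle + \langle \nabla f(\vec{y}^{(t)}), \dot{\vec{y}}^{(t)}\rangle\right) + \langle \nabla f(\vec{p}^{(t)}), \dot{\vec{p}}^{(t)}\rangle \ge 0.$$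
   Context: For a vector $\vec{v}$, $\vec{v}^+$ denotes the vector with entries $\max\{v_i,0\}$ and $\vec{v}^-$ the vector with entries $\min\{v_i,0\}$. A function $f:[0,1]^n \to \mathbb{R}_+$ is DR-submodular if for all $\vec{x}\le\vec{y}$ in $[0,1]^n$ (coordinate-wise), all $i\in[n]$ and $\delta\in[0,1]$ with $\vec{x}+\delta\vec{1}_{\{i\}}, \vec{y}+\delta\vec{1}_{\{i\}} \in [0,1]^n$, $f(\vec{x}+\delta\vec{1}_{\{i\}})-f(\vec{x}) \ge f(\vec{y}+\delta\vec{1}_{\{i\}})-f(\vec{y})$; for differentiable $f$ this is equivalent to $\nabla f(\vec{x}) \ge \nabla f(\vec{y})$ whenever $\vec{x}\le\vec{y}$. Dots denote time derivatives. *)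

(* Defs.v *)
From HB Require Import structures.
From mathcomp Require Import all_boot all_order all_algebra.
From mathcomp Require Import all_classical all_reals all_analysis.
Set Implicit Arguments. Unset Strict Implicit. Unset Printing Implicit Defensive.
Import Order.TTheory GRing.Theory Num.Theory.
Import numFieldNormedType.Exports.
Local Open Scope ring_scope.

Section Defs.
Variables (R : realType) (n : nat).
Notation vec := 'rV[R]_n.

Definition in_cube (x : vec) : Prop := forall i, 0 <= x 0 i <= 1.

Definition vle (x y : vec) : Prop := forall i, x 0 i <= y 0 i.

Definition unitv (i : 'I_n) : vec := delta_mx 0 i.

Definition DR_submodular (f : vec -> R) : Prop :=
  forall (x y : vec) (i : 'I_n) (d : R),
    in_cube x -> in_cube y -> vle x y -> 0 <= d <= 1 ->
    in_cube (x + d *: unitv i) -> in_cube (y + d *: unitv i) ->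
    f (y + d *: unitv i) - f y <= f (x + d *: unitv i) - f x.

Definition grad (f : vec -> R) (x : vec) : vec :=
  \row_i derive f x (unitv i).

Definition vpos (v : vec) : vec := \row_i Num.max (v 0 i) 0.
Definition vneg (v : vec) : vec := \row_i Num.min (v 0 i) 0.

Definition inner (u v : vec) : R := \sum_i u 0 i * v 0 i.

Definition box_proj (xs x y : vec) : vec :=
  \row_i Num.min (Num.max (xs 0 i) (x 0 i)) (y 0 i).

End Defs.

(* Main.v *)
Require Import Defs.
From HB Require Import structures.
From mathcomp Require Import all_boot all_order all_algebra.
From mathcomp Require Import all_classical all_reals all_analysis.
Import Order.TTheory GRing.Theory Num.Theory.
Import numFieldNormedType.Exports.
Local Open Scope ring_scope.

Module Helpers.
From mathcomp Require Import ring lra.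
Local Open Scope classical_set_scope.
Set Implicit Arguments. Unset Strict Implicit.
Section S.
Variables (R : realType) (n : nat).
Notation vec := 'rV[R]_n.

Lemma right_dnbhs (x : R) : x^'+ `=>` x^'.
Proof.
move=> S; rewrite /at_right /dnbhs /within; apply: (@filterS _ (nbhs x)) => y H xy.
by apply: H; rewrite gt_eqF.
Qed.

Lemma cvg_dnbhs_right {V : topologicalType} (g : R -> V) (x : R) (l : V) :
  g @ x^' --> l -> g @ x^'+ --> l.
Proof. by move=> H; apply: cvg_trans H; apply: cvg_fmap2; exact: right_dnbhs. Qed.

Lemma quot_right (f : vec -> R) (z v : vec) : derivable f z v ->
  (fun d : R => d^-1 * (f (z + d *: v) - f z)) @ 0^'+ --> derive f z v.
Proof.
move=> /cvg_ex [l Hl].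
have -> : derive f z v = l by rewrite /derive; exact: cvg_lim.
have H2 := @cvg_dnbhs_right _ _ 0 _ Hl.
move: H2; apply: cvg_trans; apply: near_eq_cvg; near=> d.
by rewrite /= [_ + z]addrC.
Unshelve. all: end_near. Qed.

Lemma quot_left (f : vec -> R) (z v : vec) : derivable f z v ->
  (fun d : R => d^-1 * (f z - f (z - d *: v))) @ 0^'+ --> derive f z v.
Proof.
move=> /cvg_ex [l Hl].
have -> : derive f z v = l by rewrite /derive; exact: cvg_lim.
have H2 : (fun h => h^-1 *: ((f \o shift z) (h *: v) - f z)) @ 0^'- --> l.
  apply: cvg_trans Hl; apply: cvg_fmap2; move=> S.
  rewrite /at_left /dnbhs /within; apply: (@filterS _ (nbhs (0:R))) => y H xy.
  by apply: H; rewrite lt_eqF.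
move/cvg_at_leftNP: H2; rewrite oppr0.
apply: cvg_trans; apply: near_eq_cvg; near=> d.
by rewrite /= invrN scaleNr scaleNr [_ + z]addrC -mulrN opprB.
Unshelve. all: end_near. Qed.

Lemma updE (z : vec) (i j : 'I_n) (c : R) :
  (z + c *: unitv R i) 0 j = if j == i then z 0 j + c else z 0 j.
Proof.
rewrite /unitv !mxE eqxx /=.
case: (eqVneq j i) => [->|/negPf h]; first by rewrite ?eqxx mulr1.
by rewrite mulr0 addr0.
Qed.

Lemma cube_upd (z : vec) i c : in_cube z -> 0 <= z 0 i + c <= 1 ->
  in_cube (z + c *: unitv R i).
Proof. by move=> hz hc j; rewrite updE; case: eqP => [->|_]. Qed.

Lemma vle_upd (u v : vec) i c : vle u v -> u 0 i <= v 0 i + c -> vle u (v + c *: unitv R i).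
Proof. by move=> h hc j; rewrite updE; case: eqP => [->|_]. Qed.

Lemma vle_upd2 (u v : vec) i c : vle u v -> vle (u + c *: unitv R i) (v + c *: unitv R i).
Proof. by move=> h j; rewrite !updE; case: eqP => [->|_]; rewrite ?lerD2r. Qed.

Lemma grad_mono (f : vec -> R) (u v : vec) (i : 'I_n) :
  (forall z, in_cube z -> differentiable f z) -> DR_submodular f ->
  in_cube u -> in_cube v -> vle u v ->
  derive f v (unitv R i) <= derive f u (unitv R i).
Proof.
move=> hd hdr hu hv huv.
have du : derivable f u (unitv R i) := diff_derivable (hd _ hu).
have dv : derivable f v (unitv R i) := diff_derivable (hd _ hv).
set e := unitv R i.
have [lt|eq] : u 0 i < v 0 i \/ u 0 i = v 0 i.
  by move: (huv i); rewrite le_eqVlt => /orP [/eqP ->|->]; [right|left].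
- apply: (ler_cvg_to (quot_left dv) (quot_right du)).
  near=> d.
  have d0 : 0 < d by near: d; exact: nbhs_right_gt.
  have d1 : d < v 0 i - u 0 i by near: d; apply: nbhs_right_lt; rewrite subr_gt0.
  have hu0 := hu i; have hv0 := hv i.
  have hc : in_cube (v - d *: e).
    rewrite -scaleNr; apply: cube_upd => //; apply/andP; split; [|lra].
    lra.
  have hc1 : in_cube (u + d *: e) by apply: cube_upd => //; apply/andP; lra.
  have hvle : vle u (v - d *: e).
    by rewrite -scaleNr; apply: vle_upd => //; lra.
  have hd01 : 0 <= d <= 1 by apply/andP; lra.
  have hc2 : in_cube (v - d *: e + d *: e) by rewrite subrK.
  have := hdr u (v - d *: e) i d hu hc hvle hd01 hc1 hc2.
  rewrite subrK => H.
  by rewrite ler_pM2l ?invr_gt0.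
- have hu0 := hu i; have hv0 := hv i.
  have [c1|c1] := ltP (v 0 i) 1.
  + apply: (ler_cvg_to (quot_right dv) (quot_right du)).
    near=> d.
    have d0 : 0 < d by near: d; exact: nbhs_right_gt.
    have d1 : d < 1 - v 0 i by near: d; apply: nbhs_right_lt; rewrite subr_gt0.
    have hc1 : in_cube (u + d *: e) by apply: cube_upd => //; apply/andP; lra.
    have hc2 : in_cube (v + d *: e) by apply: cube_upd => //; apply/andP; lra.
    have hd01 : 0 <= d <= 1 by apply/andP; lra.
    have := hdr u v i d hu hv huv hd01 hc1 hc2.
    by rewrite ler_pM2l ?invr_gt0.
  + apply: (ler_cvg_to (quot_left dv) (quot_left du)).
    near=> d.
    have d0 : 0 < d by near: d; exact: nbhs_right_gt.
    have d1 : d < 1 by near: d; apply: nbhs_right_lt; rewrite ltr01.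
    have hc1 : in_cube (u - d *: e) by rewrite -scaleNr; apply: cube_upd => //; apply/andP; lra.
    have hc2 : in_cube (v - d *: e) by rewrite -scaleNr; apply: cube_upd => //; apply/andP; lra.
    have hd01 : 0 <= d <= 1 by apply/andP; lra.
    have hc3 : in_cube (u - d *: e + d *: e) by rewrite subrK.
    have hc4 : in_cube (v - d *: e + d *: e) by rewrite subrK.
    have hl : vle (u - d *: e) (v - d *: e) by rewrite -scaleNr; exact: vle_upd2.
    have := hdr _ _ i d hc1 hc2 hl hd01 hc3 hc4.
    rewrite !subrK => H.
    by rewrite ler_pM2l ?invr_gt0.
Unshelve. all: end_near. Qed.

Lemma clamp_up (c x y x' y' : R) : x <= y -> x' <= y' ->
  Num.min (Num.max c x') y' - Num.min (Num.max c x) y <=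
  2^-1 * ((x' - x) + `|x' - x| + ((y' - y) + `|y' - y|)).
Proof.
move=> hxy hxy'.
have [hx|hx] := leP 0 (x' - x); [rewrite (ger0_norm hx) | rewrite (ltr0_norm hx)];
have [hy|hy] := leP 0 (y' - y); (try rewrite (ger0_norm hy)); (try rewrite (ltr0_norm hy));
rewrite /Num.max /Num.min; case: (ltP c x) => ?; case: (ltP c x') => ?; repeat (case: ifPn; rewrite -?leNgt -?ltNge => ?); lra.
Qed.

Lemma clamp_lo (c x y x' y' : R) : x <= y -> x' <= y' ->
  2^-1 * ((x' - x) - `|x' - x| + ((y' - y) - `|y' - y|)) <=
  Num.min (Num.max c x') y' - Num.min (Num.max c x) y.
Proof.
move=> hxy hxy'.
have [hx|hx] := leP 0 (x' - x); [rewrite (ger0_norm hx) | rewrite (ltr0_norm hx)];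
have [hy|hy] := leP 0 (y' - y); (try rewrite (ger0_norm hy)); (try rewrite (ltr0_norm hy));
rewrite /Num.max /Num.min; case: (ltP c x) => ?; case: (ltP c x') => ?; repeat (case: ifPn; rewrite -?leNgt -?ltNge => ?); lra.
Qed.

Lemma comp_quot (X : R -> vec) t i : derivable X t 1 ->
  (fun h : R => h^-1 * (X (h + t) 0 i - X t 0 i)) @ 0^'+ --> (derive1 X t) 0 i.
Proof.
move=> /cvg_ex [l Hl].
have -> : derive1 X t = l by rewrite derive1E /derive; exact: cvg_lim.
have H2 := @cvg_dnbhs_right _ _ 0 _ Hl.
have H3 := cvg_comp _ _ H2 (@coord_continuous R 1 n 0 i l).
apply: cvg_trans H3; apply: near_eq_cvg; near=> d.
by rewrite /= !mxE [_ *: 1]mulr1.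
Unshelve. all: end_near. Qed.

Lemma pd_bounds (xs : vec) (x y : R -> vec) (a b t : R) (i : 'I_n) :
  (forall s, a < s < b -> vle (x s) (y s)) -> a < t < b ->
  derivable x t 1 -> derivable y t 1 ->
  derivable (fun s => box_proj xs (x s) (y s)) t 1 ->
  0 <= (derive1 x t) 0 i -> (derive1 y t) 0 i <= 0 ->
  (derive1 y t) 0 i <= (derive1 (fun s => box_proj xs (x s) (y s)) t) 0 i
  <= (derive1 x t) 0 i.
Proof.
move=> hle /andP [ta tb] dx dy dp hX hY.
have Hx := comp_quot (i:=i) dx; have Hy := comp_quot (i:=i) dy; have Hp := comp_quot (i:=i) dp.
set Lx := (derive1 x t) 0 i in hX Hx *; set Ly := (derive1 y t) 0 i in hY Hy *.
set Lp := (derive1 (fun s => box_proj xs (x s) (y s)) t) 0 i in Hp *.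
have hnear : \forall h \near 0^'+, 0 < h /\ vle (x (h + t)) (y (h + t)).
  near=> h.
  have h0 : 0 < h by near: h; exact: nbhs_right_gt.
  have h1 : h < b - t by near: h; apply: nbhs_right_lt; rewrite subr_gt0.
  split => //; apply: hle; apply/andP; lra.
have ht := hle t (ltac:(apply/andP; lra)).
apply/andP; split.
- suff : 2^-1 * (Lx - `|Lx| + (Ly - `|Ly|)) <= Lp.
    rewrite (ger0_norm hX) (ler0_norm hY).
    by have -> : 2^-1 * (Lx - Lx + (Ly - - Ly)) = Ly by field.
  apply: (ler_cvg_to _ Hp).
    have Nx : (fun h : R => - `|h^-1 * (x (h + t) 0 i - x t 0 i)|) @ 0^'+ --> - `|Lx|.
      exact: (cvgN (cvg_norm Hx)).
    have Ny : (fun h : R => - `|h^-1 * (y (h + t) 0 i - y t 0 i)|) @ 0^'+ --> - `|Ly|.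
      exact: (cvgN (cvg_norm Hy)).
    exact: (cvgMl_tmp (a := 2^-1) (cvgD (cvgD Hx Nx) (cvgD Hy Ny))).
  near=> h.
  have [h0 hv] : 0 < h /\ vle (x (h + t)) (y (h + t)) by near: h.
  rewrite /= !fctE !mxE.
  set dX := x (h + t) 0 i - x t 0 i; set dY := y (h + t) 0 i - y t 0 i.
  have hi : 0 < h^-1 by rewrite invr_gt0.
  rewrite !normrM (gtr0_norm hi).
  have := clamp_lo (xs 0 i) (ht i) (hv i).
  rewrite -/dX -/dY => H.
  apply: le_trans _ (ler_wpM2l (ltW hi) H).
  rewrite le_eqVlt; apply/orP; left; apply/eqP; ring.
- suff : Lp <= 2^-1 * (Lx + `|Lx| + (Ly + `|Ly|)).
    rewrite (ger0_norm hX) (ler0_norm hY).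
    by have -> : 2^-1 * (Lx + Lx + (Ly + - Ly)) = Lx by field.
  apply: (ler_cvg_to Hp).
    exact: (cvgMl_tmp (a := 2^-1) (cvgD (cvgD Hx (cvg_norm Hx)) (cvgD Hy (cvg_norm Hy)))).
  near=> h.
  have [h0 hv] : 0 < h /\ vle (x (h + t)) (y (h + t)) by near: h.
  rewrite /= !fctE !mxE.
  set dX := x (h + t) 0 i - x t 0 i; set dY := y (h + t) 0 i - y t 0 i.
  have hi : 0 < h^-1 by rewrite invr_gt0.
  rewrite !normrM (gtr0_norm hi).
  have := clamp_up (xs 0 i) (ht i) (hv i).
  rewrite -/dX -/dY => H.
  apply: le_trans (ler_wpM2l (ltW hi) H) _.
  rewrite le_eqVlt; apply/orP; left; apply/eqP; ring.
Unshelve. all: end_near. Qed.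

Lemma box_props (xs u v : vec) : in_cube u -> in_cube v -> vle u v ->
  [/\ in_cube (box_proj xs u v), vle u (box_proj xs u v) & vle (box_proj xs u v) v].
Proof.
move=> hu hv huv; split => j; rewrite mxE; have := hu j; have := hv j; have := huv j;
rewrite /Num.max /Num.min; case: (ltP (xs 0 j) (u 0 j)) => ?;
repeat (case: ifPn; rewrite -?leNgt -?ltNge => ?); move=> *; try (apply/andP); lra.
Qed.
End S.
Lemma coord_ineq0 (R : realType) (a b g P : R) : 0 <= a -> b <= 0 -> b <= g -> g <= a ->
  b <= P -> P <= a -> 0 <= 2^-1 * (a * a + b * b) + g * P.
Proof.
move=> ha hb h1 h2 h3 h4.
have sq : 0 <= (a + b) * (a + b) by rewrite -expr2 sqr_ge0.
case: (leP 0 g) => hg.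
- have e1 : 0 <= g * (P - b) by apply: mulr_ge0; lra.
  have e2 : 0 <= (a - g) * (- b) by apply: mulr_ge0; lra.
  nra.
- have e1 : 0 <= (- g) * (a - P) by apply: mulr_ge0; lra.
  have e2 : 0 <= (g - b) * a by apply: mulr_ge0; lra.
  nra.
Qed.

Lemma coord_ineq (R : realType) (A B g P : R) : B <= g -> g <= A -> Num.min B 0 <= P -> P <= Num.max A 0 ->
  0 <= 2^-1 * (A * Num.max A 0 + B * Num.min B 0) + g * P.
Proof.
move=> h1 h2.
have -> : A * Num.max A 0 = Num.max A 0 * Num.max A 0.
  by rewrite /Num.max; case: (ltP A 0) => //; rewrite !mulr0.
have -> : B * Num.min B 0 = Num.min B 0 * Num.min B 0.
  by rewrite /Num.min; case: (ltP B 0) => //; rewrite !mulr0.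
apply: coord_ineq0.
- by rewrite le_max lexx orbT.
- by rewrite ge_min lexx orbT.
- by rewrite ge_min h1.
- by rewrite le_max h2.
Qed.

End Helpers.
Import Helpers.

Theorem lemma5 (R : realType) (n : nat) (f : 'rV[R]_n -> R) (xstar : 'rV[R]_n)
  (a b : R) (x y : R -> 'rV[R]_n) :
  (forall z, in_cube z -> 0 <= f z) ->
  (forall z, in_cube z -> differentiable f z) ->
  DR_submodular f ->
  in_cube xstar -> (forall z, in_cube z -> f z <= f xstar) ->
  (forall t, a < t < b ->
     [/\ in_cube (x t), in_cube (y t) & vle (x t) (y t)] /\
     [/\ derivable x t 1, derivable y t 1,
         derive1 x t = vpos (grad f (x t)) &
         derive1 y t = vneg (grad f (y t))]) ->
  forall t, a < t < b ->
    derivable (fun s => box_proj xstar (x s) (y s)) t 1 ->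
    0 <= 2^-1 * (inner (grad f (x t)) (derive1 x t) + inner (grad f (y t)) (derive1 y t))
         + inner (grad f (box_proj xstar (x t) (y t)))
                 (derive1 (fun s => box_proj xstar (x s) (y s)) t).
Proof.
move=> _ hdiff hDR hxs _ htraj t ht dp.
have [[hcx hcy hxy] [dx dy ex ey]] := htraj t ht.
have hle : forall s, a < s < b -> vle (x s) (y s).
  by move=> s hs; have [[_ _ ?] _] := htraj s hs.
have [hcp hxp hpy] := box_props xstar hcx hcy hxy.
have := pd_bounds (i := _) hle ht dx dy dp.
rewrite ex ey => hpd.
rewrite /inner -big_split mulr_sumr -big_split /=.
apply: sumr_ge0 => i _.
have := hpd i; rewrite !mxE le_max lexx orbT ge_min lexx orbT => /(_ isT isT) /andP [h1 h2].
apply: coord_ineq => //.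
- exact: grad_mono.
- exact: grad_mono.
Qed.
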